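(* Let $n\ge1$ and let $A\subseteq\mathbb{F}_3^n$ be such that there are no $a,b,c\in A$ with $b\neq c$ and $a+b+c=0$. Then for every integer $d\ge0$, $$|A|\le 2\,|M(n,\lfloor d/2\rfloor)|+3^n-|M(n,d)|.$$
   Context: $\mathbb{F}_3$ is the field of integers modulo $3$. For integers $n\ge1$ and $e\ge 0$, $M(n,e)$ denotes the set of monomials $x_1^{\alpha_1}\cdots x_n^{\alpha_n}$ with $0\le\alpha_i\le2$ for all $i$ and $\alpha_1+\dots+\alpha_n\le e$; thus $|M(n,e)|=\sum_{i=0}^{e}\binom{n}{i}_2$, where $\binom{n}{i}_2$ is the coefficient of $x^i$ in $(1+x+x^2)^n$. *)

(* Defs.v *)
From HB Require Import structures.
From mathcomp Require Import all_boot all_order all_algebra.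
Set Implicit Arguments. Unset Strict Implicit. Unset Printing Implicit Defensive.
Import GRing.Theory.

(* M(n,e): exponent vectors alpha : 'I_n -> {0,1,2} with total degree <= e.
   A monomial x_1^{a_1}...x_n^{a_n} is identified with its exponent vector. *)
Definition monomials (n e : nat) : {set {ffun 'I_n -> 'I_3}} :=
  [set alpha : {ffun 'I_n -> 'I_3} | (\sum_(i < n) nat_of_ord (alpha i) <= e)%N].

(* Main.v *)
Require Import Defs.
From HB Require Import structures.
From mathcomp Require Import all_boot all_order all_algebra.
From mathcomp Require Import ring zify.
Import GRing.Theory.
Open Scope ring_scope.

Section LinAlg.
Variable F : fieldType.

Lemma rank_addmx m n (A B : 'M[F]_(m,n)) : (\rank (A + B)%R <= \rank A + \rank B)%N.
Proof.
apply: (leq_trans (mxrankS (addmx_sub_adds (submx_refl A) (submx_refl B)))).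
exact: mxrank_adds_leqif.
Qed.

Lemma rank_sum_rank1 (I : finType) (P : pred I) N (u : I -> 'cV[F]_N)
  (w : I -> 'rV[F]_N) : (\rank (\sum_(i | P i) u i *m w i)%R <= #|P|)%N.
Proof.
rewrite -sum1_card.
apply: (big_ind2 (fun (M : 'M[F]_N) k => \rank M <= k)%N).
- by rewrite mxrank0.
- move=> M1 k1 M2 k2 h1 h2; exact: leq_trans (rank_addmx _ _ M1 M2) (leq_add h1 h2).

- move=> i _; exact: leq_trans (mxrankM_maxr _ _) (rank_leq_row _).
Qed.

Lemma rank_mxsub m n p q (f : 'I_p -> 'I_m) (g : 'I_q -> 'I_n) (A : 'M[F]_(m,n)) :
  (\rank (mxsub f g A) <= \rank A)%N.
Proof.
rewrite mxsubrc; apply: leq_trans (mxrankS (rowsub_sub _ _)) _.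
rewrite -{1}[A]mulmx1 -mulmx_colsub; exact: mxrankM_maxl.
Qed.

Lemma support N (W : 'M[F]_N) : exists v : 'rV[F]_N, exists g : 'I_(\rank W) -> 'I_N,
  [/\ (v <= W)%MS, injective g & forall i, v 0 (g i) = 1].
Proof.
set B := row_base W.
have fB : row_full B^T by rewrite /row_full mxrank_tr; exact: row_base_free.
pose g : 'I_(\rank W) -> 'I_N := fun i => fullrankfun fB i.
set C := rowsub g B^T.
have uC : C^T \in unitmx by rewrite unitmx_tr; exact: fullrowsub_unit.
exists (const_mx 1 *m invmx C^T *m B), g; split.
- apply: submx_trans (submxMl _ _) _; by rewrite /B eq_row_base.
- by move=> i j /fullrankfun_inj.
- move=> i.
  have : colsub g (const_mx 1 *m invmx C^T *m B) = const_mx 1 :> 'rV[F]_(\rank W).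
    rewrite -mulmx_colsub -mulmxA.
    have -> : colsub g B = C^T by rewrite /C trmx_mxsub trmxK.
    by rewrite mulVmx // mulmx1.
  by move/matrixP => /(_ 0 i); rewrite !mxE.
Qed.
End LinAlg.
Arguments rank_addmx {F m n}.
Arguments rank_mxsub {F m n p q}.
Arguments support {F N}.

Definition mono n (al : {ffun 'I_n -> 'I_3}) (x : 'rV['F_3]_n) : 'F_3 :=
  \prod_i x 0 i ^+ al i.
Arguments mono {n}.
Definition kd (c : 'F_3) (e : 'I_3) : 'F_3 :=
  if (e == 0 :> nat) then 1 - c ^+ 2 else if (e == 1 :> nat) then c *+ 2 else -1.

Lemma F3sq (z : 'F_3) : z != 0 -> z ^+ 2 = 1.
Proof. case: z => [[|[|[|k]]] Hk] //= _; exact/eqP. Qed.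
Lemma F3neg2 (z : 'F_3) : -(z + z) = z.
Proof. case: z => [[|[|[|k]]] Hk] //=; exact/eqP. Qed.

Lemma eqF3 (a b : 'F_3) : ((a == b)%:R : 'F_3) = \sum_(e < 3) kd b e * a ^+ e.
Proof.
rewrite !big_ord_recl big_ord0 /kd /=.
have -> : ((a == b)%:R : 'F_3) = 1 - (a - b) ^+ 2.
  case: eqP => [->|/eqP ne]; first by rewrite subrr expr0n /= subr0.
  by rewrite F3sq ?subr_eq0 // subrr.
ring.
Qed.

Lemma eq_row_prod n (x y : 'rV['F_3]_n) :
  ((x == y)%:R : 'F_3) = \prod_i ((x 0 i == y 0 i)%:R).
Proof.
case: eqP => [->|ne]; first by rewrite big1 // => i _; rewrite eqxx.
have [i hi] : exists i, x 0 i != y 0 i.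
  apply/existsP; apply/negP => /existsP hn; apply: ne; apply/rowP => j.
  by apply/eqP/negP => hj; apply: hn; exists j; apply/negP.
by rewrite (bigD1 i) //= (negPf hi) mul0r.
Qed.

Lemma delta_expand n (x y : 'rV['F_3]_n) : ((x == y)%:R : 'F_3) =
  \sum_(al : {ffun 'I_n -> 'I_3}) (\prod_i kd (y 0 i) (al i)) * mono al x.
Proof.
rewrite eq_row_prod; under eq_bigr do rewrite eqF3.
rewrite bigA_distr_bigA; apply: eq_bigr => al _.
by rewrite -big_split.
Qed.

Definition kb (e s t : 'I_3) : 'F_3 :=
  if (s + t == e)%N then (-1) ^+ e * ('C(e, s))%:R else 0.

Lemma binF3 (e : 'I_3) (a b : 'F_3) :
  (-(a+b)) ^+ e = \sum_(s < 3) \sum_(t < 3) kb e s t * a ^+ s * b ^+ t.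
Proof.
rewrite /kb; case: e => [[|[|[|k]]] He] //=; rewrite !big_ord_recl !big_ord0 /= /bump /= ?bin0 ?bin1 ?binn; ring.
Qed.

Lemma mono_neg n (al : {ffun 'I_n -> 'I_3}) (a b : 'rV['F_3]_n) :
  mono al (-(a+b)) = \sum_(S : {ffun 'I_n -> 'I_3}) \sum_(T : {ffun 'I_n -> 'I_3})
     (\prod_i kb (al i) (S i) (T i)) * mono S a * mono T b.
Proof.
rewrite /mono; under eq_bigr do rewrite !mxE binF3.
rewrite bigA_distr_bigA; apply: eq_bigr => S _.
rewrite bigA_distr_bigA; apply: eq_bigr => T _.
by rewrite -!big_split.
Qed.

Definition deg n (al : {ffun 'I_n -> 'I_3}) : nat := \sum_(i < n) nat_of_ord (al i).
Arguments deg {n}.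

Lemma in_monomials n e al : (al \in monomials n e) = (deg al <= e)%N.
Proof. by rewrite inE. Qed.

Section CLP.
Variables (n d : nat) (c : {ffun 'I_n -> 'I_3} -> 'F_3).
Local Notation K := {ffun 'I_n -> 'I_3}.

Definition qc (S T : K) : 'F_3 :=
  \sum_(al in monomials n d) c al * \prod_i kb (al i) (S i) (T i).

Lemma qc0 S T : (d < deg S + deg T)%N -> qc S T = 0.
Proof.
move=> hd; apply: big1 => al hal.
have [i hi | hall] := pickP (fun i => (S i + T i != al i)%N).
  by rewrite (bigD1 i) //= /kb (negPf hi) mul0r mulr0.
exfalso; move: hal; rewrite in_monomials.
have -> : deg al = (deg S + deg T)%N.
  rewrite /deg -big_split /=; apply: eq_bigr => i _.
  by move: (hall i) => /= /negbFE /eqP.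
by rewrite leqNgt hd.
Qed.

Lemma f_expand (a b : 'rV['F_3]_n) :
  \sum_(al in monomials n d) c al * mono al (-(a+b)) =
  \sum_(S : K) \sum_(T : K) qc S T * mono S a * mono T b.
Proof.
transitivity (\sum_(al in monomials n d) \sum_(S : K) \sum_(T : K)
   c al * ((\prod_i kb (al i) (S i) (T i)) * mono S a * mono T b)).
  apply: eq_bigr => al _; rewrite mono_neg mulr_sumr; apply: eq_bigr => S _.
  by rewrite mulr_sumr.
rewrite exchange_big; apply: eq_bigr => S _; rewrite exchange_big.
apply: eq_bigr => T _; rewrite /qc !mulr_suml; apply: eq_bigr => al _; ring.
Qed.

Local Notation N := #|{: 'rV['F_3]_n}|.

Definition Mv : 'M['F_3]_N := \matrix_(j < N, k < N)
   (\sum_(al in monomials n d) c al * mono al (-(enum_val j + enum_val k))).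

Lemma CLP : (\rank Mv <= 2 * #|monomials n d./2|)%N.
Proof.
set h := d./2.
set Mh := monomials n h.
have E : Mv =
  ((\sum_(S in Mh) (\col_(j < N) mono S (enum_val j)) *m
       (\row_(k < N) \sum_(T : K) qc S T * mono T (enum_val k)))
  + (\sum_(T in Mh) (\col_(j < N) \sum_(S | S \notin Mh) qc S T * mono S (enum_val j)) *m
       (\row_(k < N) mono T (enum_val k))))%R.
  apply/matrixP => j k; rewrite !mxE f_expand !summxE.
  rewrite (bigID (fun S => S \in Mh)) /=; congr (_ + _).
    apply: eq_bigr => S _; rewrite !mxE big_ord1 !mxE mulr_sumr.
    by apply: eq_bigr => T _; ring.
  rewrite exchange_big /= (bigID (fun T => T \in Mh)) /= [X in _ + X]big1 ?addr0.
    apply: eq_bigr => T _; rewrite !mxE big_ord1 !mxE mulr_suml.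
    by apply: eq_bigr => S _; ring.
  move=> T hT; apply: big1 => S hS; rewrite qc0 ?mul0r ?mulr0 //.
  move: hT hS; rewrite !in_monomials -!ltnNge => hT hS.
  have := odd_double_half d; have := leq_b1 (odd d); rewrite -addnn -/h; lia.
rewrite E; apply: (leq_trans (rank_addmx _ _)).
by rewrite mul2n -addnn leq_add // rank_sum_rank1.
Qed.
End CLP.
Arguments Mv {n}.
Arguments CLP {n}.

Definition monovec n (al : {ffun 'I_n -> 'I_3}) : 'rV['F_3]_#|{: 'rV['F_3]_n}| :=
  \row_j mono al (enum_val j).
Arguments monovec {n}.

Lemma card_X n : #|{: 'rV['F_3]_n}| = (3 ^ n)%N.
Proof. by rewrite card_mx card_Fp // mul1n. Qed.

Lemma card_K n : #|{: {ffun 'I_n -> 'I_3}}| = (3 ^ n)%N.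
Proof. by rewrite card_ffun !card_ord. Qed.

Lemma full n : (1%:M <= \sum_(al : {ffun 'I_n -> 'I_3}) <<monovec al>>)%MS.
Proof.
apply/row_subP => j; rewrite row1; apply/sub_sums_genmxP.
exists (fun al : {ffun 'I_n -> 'I_3} => (\prod_i kd (enum_val j 0 i) (al i))%:M).
apply/rowP => k; rewrite !mxE summxE eqxx /=.
rewrite -(inj_eq enum_val_inj) delta_expand; apply: eq_bigr => al _.
by rewrite mul_scalar_mx !mxE.
Qed.

Lemma rank_sums_le (I : finType) (P : pred I) N (v : I -> 'rV['F_3]_N) :
  (\rank (\sum_(i | P i) <<v i>>)%MS <= \sum_(i | P i) 1)%N.
Proof.
apply: (big_ind2 (fun (M : 'M['F_3]_N) k => \rank M <= k)%N).
- by rewrite mxrank0.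
- move=> M1 k1 M2 k2 h1 h2.
  exact: leq_trans (mxrank_adds_leqif M1 M2) (leq_add h1 h2).
- by move=> i _; rewrite genmxE rank_leq_row.
Qed.

Lemma rank_Vd n d : (#|{: 'rV['F_3]_n}| <=
   \rank (\sum_(al in monomials n d) <<monovec al>>)%MS
    + (#|{: 'rV['F_3]_n}| - #|monomials n d|))%N.
Proof.
have := mxrankS (full n); rewrite mxrank1.
rewrite (bigID (fun al => al \in monomials n d)) /= => h.
apply: (leq_trans h); apply: (leq_trans (mxrank_adds_leqif _ _)).
rewrite leq_add2l; apply: (leq_trans (rank_sums_le _ _ _ _)).
rewrite card_X -(card_K n) -(cardsC (monomials n d)) addKn sum1_card.
apply: subset_leq_card; apply/subsetP => al; rewrite [al \in ~: _]inE.
by rewrite unfold_in.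
Qed.

Lemma rankZ n (A : {set 'rV['F_3]_n}) :
  (#|A| <= \rank (diag_mx (\row_(j < #|{: 'rV['F_3]_n}|) ((enum_val j \in A)%:R : 'F_3))))%N.
Proof.
pose h : 'I_#|A| -> 'I_#|{: 'rV['F_3]_n}| := fun i => enum_rank (enum_val i).
have E : mxsub h h (diag_mx (\row_(j < #|{: 'rV['F_3]_n}|) ((enum_val j \in A)%:R : 'F_3)))
   = 1%:M.
  apply/matrixP => i i'; rewrite !mxE /h enum_rankK enum_valP.
  by rewrite (inj_eq enum_rank_inj) (inj_eq enum_val_inj).
by have := rank_mxsub h h (diag_mx (\row_(j < #|{: 'rV['F_3]_n}|) ((enum_val j \in A)%:R : 'F_3))); rewrite E mxrank1.
Qed.

Lemma F3neg2v n (x : 'rV['F_3]_n) : -(x + x) = x.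
Proof. by apply/rowP => i; rewrite !mxE F3neg2. Qed.

Close Scope ring_scope.

Theorem mainTheorem5 (n : nat) (hn : (1 <= n)%N) (A : {set 'rV['F_3]_n})
  (hA : forall a b c : 'rV['F_3]_n, a \in A -> b \in A -> c \in A ->
          b != c -> (a + b + c != 0)%R)
  (d : nat) :
  (#|A| <= 2 * #|monomials n d./2| + (3 ^ n - #|monomials n d|))%N.
Proof.
set N := #|{: 'rV['F_3]_n}|.
have hN : N = 3 ^ n := card_X n.
set Vd := (\sum_(al in monomials n d) <<monovec al>>)%MS.
set Z := diag_mx (\row_(j < N) ((enum_val j \in A)%:R : 'F_3)%R).
set W := (Vd :&: Z)%MS.
have hVd := rank_Vd n d.
have hZ := rankZ n A.
have hcap := mxrank_sum_cap Vd Z.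
have hle := rank_leq_col (Vd + Z)%MS.
have hmd : #|monomials n d| <= N.
  by rewrite hN -(card_K n); apply: max_card.
have [v [g [vW ginj gv]]] := support W.
have vVd : (v <= Vd)%MS := submx_trans vW (capmxSl _ _).
have vZ : (v <= Z)%MS := submx_trans vW (capmxSr _ _).
have vA : forall j : 'I_N, enum_val j \notin A -> v 0%R j = 0%R.
  move=> j hj; case/submxP: vZ => w ->.
  by rewrite mul_mx_diag !mxE (negPf hj) mulr0.
case/sub_sums_genmxP: vVd => u hv.
pose c (al : {ffun 'I_n -> 'I_3}) := u al 0%R 0%R.
have hvj : forall j : 'I_N, v 0%R j = (\sum_(al in monomials n d) c al * mono al (enum_val j))%R.
  move=> j; rewrite hv summxE; apply: eq_bigr => al _.
  by rewrite !mxE big_ord1 mxE.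
have inA : forall i, enum_val (g i) \in A.
  move=> i; apply: contraT => hn'; move: (gv i); rewrite vA // => /eqP.
have E : mxsub g g (Mv d c) = (1%:M)%R.
  apply/matrixP => i i'; rewrite !mxE.
  have [<-|ne] := eqVneq i i'.
    by rewrite F3neg2v -hvj gv.
  set x := enum_val (g i); set y := enum_val (g i').
  have xy : x != y.
    by apply: contra ne => /eqP /enum_val_inj /ginj ->.
  set p := (- (x + y))%R.
  have pA : p \notin A.
    apply/negP => hp; have := hA p x y hp (inA i) (inA i') xy.
    by rewrite /p -addrA addNr eqxx.
  by rewrite -[p](enum_rankK p) -hvj vA ?enum_rankK.
have hW : \rank W <= 2 * #|monomials n d./2|.
  have := rank_mxsub g g (Mv d c); rewrite E mxrank1 => h.
  exact: leq_trans h (CLP d c).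
move: hVd hZ hcap hle hmd hW; rewrite -hN /W /Z /Vd /N; lia.
Qed.
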